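(* Assume $-1\in\mathbb F^2$ and let $J=JCK(Z,\delta)$. On $\mathcal A=\mathrm{Der}(J)^{[\bar1,\bar1]}$ define the multiplication $X\cdot Y=-\tau\bigl([\varphi(X),\varphi^2(Y)]\bigr)$ and the map $\bar X=-\tau(X)$, where $S_4$ acts on $\mathrm{Der}(J)$ by conjugation ($\sigma(X)=\sigma X\sigma^{-1}$) and $[\,,]$ is the supercommutator. Then $\bar X=X$ for all $X\in\mathcal A$, and the superalgebra $(\mathcal A,\cdot)$ is isomorphic to the Jordan superalgebra $K=Z\oplus Zy$ (a subalgebra of $J$); explicitly, $\Phi:K\to\mathcal A$, $f+gy\mapsto D(v_1,fv_2)+\sqrt{-1}\,D(v_3,gy)$ ($f,g\in Z$) is an isomorphism of superalgebras. Thus $(\mathcal A,\cdot,\bar{\ })$ is isomorphic to $K$ with the trivial involution.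
   Context: Let $\mathbb F$ be a field of characteristic $\neq 2$ with $-1\in\mathbb F^2$, $Z$ a unital commutative associative $\mathbb F$-algebra, and $\delta$ a derivation of $Z$ such that $Z\delta(Z)=Z$ (the $\mathbb F$-span of all products $f\delta(g)$, $f,g\in Z$, is $Z$). The Cheng-Kac Jordan superalgebra $J=JCK(Z,\delta)=J_{\bar0}\oplus J_{\bar1}$ is defined as follows: $J_{\bar0}=Z1\oplus Zw_1\oplus Zw_2\oplus Zw_3$ and $J_{\bar1}=Zx\oplus Zx_1\oplus Zx_2\oplus Zx_3$ are free $Z$-modules of rank 4; $J_{\bar0}$ is the $Z$-algebra $(\mathbb F1\oplus\mathbb Fw_1\oplus\mathbb Fw_2\oplus\mathbb Fw_3)\otimes_{\mathbb F}Z$ with $1$ the identity, $w_1^2=w_2^2=1$, $w_3^2=-1$, $w_iw_j=0$ for $i\ne j$. For $f,g\in Z$ and $i,j\in\{1,2,3\}$ the remaining products are: $f(gx)=(fg)x$, $f(gx_j)=(fg)x_j$, $(fw_i)(gx)=(\delta(f)g)x_i$, $(fw_i)(gx_j)=-(fg)x_{i\times j}$, $(fx)(gx)=\delta(f)g-f\delta(g)$, $(fx)(gx_j)=-(fg)w_j$, $(fx_i)(gx)=(fg)w_i$, $(fx_i)(gx_j)=0$, extended by supercommutativity ($ab=(-1)^{|a||b|}ba$), where $x_{1\times2}=-x_{2\times1}=x_3$, $x_{1\times3}=-x_{3\times1}=x_2$, $x_{3\times2}=-x_{2\times3}=x_1$, $x_{i\times i}=0$. $J$ is $\mathbb Z_2^2$-graded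 by $J^{[\bar0,\bar0]}=Z\oplus Zx$, $J^{[\bar1,\bar0]}=Zw_1\oplus Zx_1$, $J^{[\bar0,\bar1]}=Zw_2\oplus Zx_2$, $J^{[\bar1,\bar1]}=Zw_3\oplus Zx_3$, and $\mathrm{Der}(J)^{\alpha}$ denotes the (super) derivations mapping each $J^{\beta}$ into $J^{\alpha+\beta}$. $D(a,b)$ is $c\mapsto a(bc)-(-1)^{|a||b|}b(ac)$. Fix $\sqrt{-1}\in\mathbb F$ and set $v_1=\sqrt{-1}w_1$, $v_2=\sqrt{-1}w_2$, $v_3=w_3$, $y=x$, $y_1=\sqrt{-1}x_1$, $y_2=\sqrt{-1}x_2$, $y_3=x_3$. $S_4$ acts on $J$ by automorphisms via: $(1\,2)(3\,4)$ is the identity on $J^{[\bar0,\bar0]}\oplus J^{[\bar1,\bar1]}$ and $-1$ on $J^{[\bar1,\bar0]}\oplus J^{[\bar0,\bar1]}$; $(2\,3)(4\,1)$ is the identity on $J^{[\bar0,\bar0]}\oplus J^{[\bar1,\bar0]}$ and $-1$ on $J^{[\bar0,\bar1]}\oplus J^{[\bar1,\bar1]}$; $\varphi=(1\,2\,3)$ is $Z$-linear with $1\mapsto1$, $y\mapsto y$, $v_i\mapsto v_{i+1}$, $y_i\mapsto y_{i+1}$ (indices mod 3); $\tau=(1\,2)$ is $Z$-linear with $1\mapsto1$, $y\mapsto y$, $v_1\mapsto -v_2$, $v_2\mapsto-v_1$, $v_3\mapsto-v_3$, $y_1\mapsto-y_2$, $y_2\mapsto-y_1$, $y_3\mapsto-y_3$.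 *)

(* Defs.v *)
From HB Require Import structures.
From mathcomp Require Import all_boot all_order all_algebra.
Set Implicit Arguments. Unset Strict Implicit. Unset Printing Implicit Defensive.
Import Order.TTheory GRing.Theory Num.Theory.
Local Open Scope ring_scope.

Section CK.
Variables (F : fieldType) (Z : comAlgType F) (delta : Z -> Z) (sqrtm1 : F).

(* Basis index of J over Z: (false,0)=1, (false,k)=w_k, (true,0)=x, (true,k)=x_k.
   The first component is the super-parity. *)
Definition bidx := (bool * 'I_4)%type.
Definition J := {ffun bidx -> Z}.

Definition mk (b : bidx) (z : Z) : J := [ffun b' => if b' == b then z else 0].
Definition bas (p : bool) (k : nat) : bidx := (p, inord k).

Definition xcross (k l : nat) (z : Z) : J :=
  match k, l with
  | 1, 2 => mk (bas true 3) z
  | 2, 1 => mk (bas true 3) (- z)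
  | 1, 3 => mk (bas true 2) z
  | 3, 1 => mk (bas true 2) (- z)
  | 3, 2 => mk (bas true 1) z
  | 2, 3 => mk (bas true 1) (- z)
  | _, _ => 0
  end.

Definition wsq (k : nat) : Z := if k == 3 then -1 else 1.

Definition prod_ev_od (k : nat) (f : Z) (l : nat) (g : Z) : J :=
  if k == 0 then mk (bas true l) (f * g)            (* f(gx)=(fg)x, f(gx_j)=(fg)x_j *)
  else if l == 0 then mk (bas true k) (delta f * g)  (* (fw_i)(gx)=(delta(f)g)x_i *)
  else xcross k l (- (f * g)).                        (* (fw_i)(gx_j)=-(fg)x_{ixj} *)

Definition bprod (b1 : bidx) (f : Z) (b2 : bidx) (g : Z) : J :=
  let k := nat_of_ord b1.2 in let l := nat_of_ord b2.2 in
  match b1.1, b2.1 with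
  | false, false =>
      if k == 0 then mk (bas false l) (f * g)
      else if l == 0 then mk (bas false k) (f * g)
      else if k == l then mk (bas false 0) (wsq k * (f * g))
      else 0
  | false, true => prod_ev_od k f l g
  | true, false => prod_ev_od l g k f     (* supercommutativity, even*odd *)
  | true, true =>
      if k == 0 then
        (if l == 0 then mk (bas false 0) (delta f * g - f * delta g)
         else mk (bas false l) (- (f * g)))
      else if l == 0 then mk (bas false k) (f * g)
      else 0
  end.

Definition mulJ (a c : J) : J := \sum_(b1 : bidx) \sum_(b2 : bidx) bprod b1 (a b1) b2 (c b2).

Definition zscale (f : Z) (a : J) : J := [ffun b => f * a b].

Definition spr (p : bool) (a : J) : J := [ffun b => if b.1 == p then a b else 0].

Definition zdeg (k : 'I_4) : bool * bool :=
  match nat_of_ord k with 0 => (false, false) | 1 => (true, false)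
                     | 2 => (false, true) | _ => (true, true) end.
Definition zpr (beta : bool * bool) (a : J) : J :=
  [ffun b => if zdeg b.2 == beta then a b else 0].
Definition zadd (al be : bool * bool) : bool * bool := (addb al.1 be.1, addb al.2 be.2).

Definition is_sder (p : bool) (D : J -> J) : Prop :=
  (forall (r : F) (a b : J), D (r *: a + b) = r *: D a + D b) /\
  (forall q a, D (spr q a) = spr (addb q p) (D (spr q a))) /\
  (forall q a b, D (mulJ (spr q a) b) =
     mulJ (D (spr q a)) b + (-1) ^+ (p && q) *: mulJ (spr q a) (D b)).

Definition isDer (D : J -> J) : Prop :=
  exists D0 D1, is_sder false D0 /\ is_sder true D1 /\ forall a, D a = D0 a + D1 a.

Definition isDer_deg (al : bool * bool) (D : J -> J) : Prop :=
  isDer D /\ forall be a, D (zpr be a) = zpr (zadd al be) (D (zpr be a)).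

Definition mpart (p : bool) (X : J -> J) : J -> J :=
  fun a => spr p (X (spr false a)) + spr (~~ p) (X (spr true a)).
Definition hom_map (p : bool) (X : J -> J) : Prop := forall a, X a = mpart p X a.

Definition scomm (X Y : J -> J) : J -> J := fun a =>
  \sum_(p : bool) \sum_(q : bool)
     (mpart p X (mpart q Y a) - (-1) ^+ (p && q) *: mpart q Y (mpart p X a)).

(* the basis v_k, y_k and the automorphisms phi = (1 2 3), tau = (1 2) *)
Definition vb (p : bool) (k : nat) : J :=
  if (k == 1) || (k == 2) then sqrtm1 *: mk (bas p k) 1 else mk (bas p k) 1.
(* e_(p,k) = cw k *: vb p k, since w_k = -sqrt(-1) v_k for k=1,2 *)
Definition cw (k : nat) : F := if (k == 1) || (k == 2) then - sqrtm1 else 1.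
Definition zlin (img : bidx -> J) (a : J) : J := \sum_(b : bidx) zscale (a b) (img b).
Definition cyc3 (k : nat) : nat := match k with 0 => 0 | 1 => 2 | 2 => 3 | _ => 1 end.
Definition sw12 (k : nat) : nat := match k with 1 => 2 | 2 => 1 | k => k end.
Definition phiJ : J -> J :=
  zlin (fun b => cw b.2 *: vb b.1 (cyc3 b.2)).
Definition tauJ : J -> J :=
  zlin (fun b => cw b.2 *: (if nat_of_ord b.2 == 0 then vb b.1 0 else - vb b.1 (sw12 b.2))).

Definition phiD (X : J -> J) : J -> J := phiJ \o X \o (phiJ \o phiJ).   (* phi^-1 = phi^2 *)
Definition phi2D (X : J -> J) : J -> J := (phiJ \o phiJ) \o X \o phiJ.
Definition tauD (X : J -> J) : J -> J := tauJ \o X \o tauJ.             (* tau^-1 = tau *)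

Definition ckmulA (X Y : J -> J) : J -> J := fun a => - tauD (scomm (phiD X) (phi2D Y)) a.
Definition ckbarA (X : J -> J) : J -> J := fun a => - tauD X a.

Definition Dop (pa pb : bool) (a b : J) : J -> J :=
  fun c => mulJ a (mulJ b c) - (-1) ^+ (pa && pb) *: mulJ b (mulJ a c).

(* K = Z + Zy as a subset of J (y = x) *)
Definition inK (a : J) : Prop := forall b : bidx, nat_of_ord b.2 != 0 -> a b = 0.

Definition PhiK (a : J) : J -> J := fun c =>
  Dop false false (vb false 1) (zscale (a (bas false 0)) (vb false 2)) c
  + sqrtm1 *: Dop false true (vb false 3) (zscale (a (bas true 0)) (vb true 0)) c.

End CK.

(* Main.v *)
Require Import Defs.
From HB Require Import structures.
From mathcomp Require Import all_boot all_order all_algebra.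
From mathcomp Require Import ring.
From Stdlib Require Import FunctionalExtensionality.
Import GRing.Theory.
Local Open Scope ring_scope.

Definition i0 : 'I_4 := @Ordinal 4 0 isT.
Definition i1 : 'I_4 := @Ordinal 4 1 isT.
Definition i2 : 'I_4 := @Ordinal 4 2 isT.
Definition i3 : 'I_4 := @Ordinal 4 3 isT.

Lemma inord0 : (inord 0 : 'I_4) = i0. Proof. by apply/val_inj; rewrite /= inordK. Qed.
Lemma inord1 : (inord 1 : 'I_4) = i1. Proof. by apply/val_inj; rewrite /= inordK. Qed.
Lemma inord2 : (inord 2 : 'I_4) = i2. Proof. by apply/val_inj; rewrite /= inordK. Qed.
Lemma inord3 : (inord 3 : 'I_4) = i3. Proof. by apply/val_inj; rewrite /= inordK. Qed.

Lemma sum_bidx (R : nmodType) (G : bidx -> R) :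
  \sum_(b : bidx) G b = G (false,i0) + G (false,i1) + G (false,i2) + G (false,i3)
     + (G (true,i0) + G (true,i1) + G (true,i2) + G (true,i3)).
Proof.
rewrite (eq_bigr (fun b : bool * 'I_4 => G (b.1, b.2))); last by case.
rewrite -(pair_bigA _ (fun p k => G (p,k))) /= big_bool /= addrC.
rewrite !big_ord_recl !big_ord0 !addr0 !addrA.
have -> : (lift ord0 ord0 : 'I_4) = i1 by apply/val_inj.
have -> : (lift ord0 (lift ord0 ord0) : 'I_4) = i2 by apply/val_inj.
have -> : (lift ord0 (lift ord0 (lift ord0 ord0)) : 'I_4) = i3 by apply/val_inj.
have -> : (ord0 : 'I_4) = i0 by apply/val_inj.
by [].
Qed.

Section Pf.
Variables (F : fieldType) (Z : comAlgType F) (delta : {linear Z -> Z}) (sqrtm1 : F).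
Hypothesis hchar : (2%:R : F) != 0.
Hypothesis hsqrt : sqrtm1 * sqrtm1 = -1.
Hypothesis hder : forall f g : Z, delta (f * g) = delta f * g + f * delta g.

Local Notation J := (J Z).
Local Notation mulJ := (mulJ delta).
Local Notation "'W0' a" := (a (false, i0)) (at level 10, a at level 8).
Local Notation "'W1' a" := (a (false, i1)) (at level 10, a at level 8).
Local Notation "'W2' a" := (a (false, i2)) (at level 10, a at level 8).
Local Notation "'W3' a" := (a (false, i3)) (at level 10, a at level 8).
Local Notation "'X0' a" := (a (true, i0)) (at level 10, a at level 8).
Local Notation "'X1' a" := (a (true, i1)) (at level 10, a at level 8).
Local Notation "'X2' a" := (a (true, i2)) (at level 10, a at level 8).
Local Notation "'X3' a" := (a (true, i3)) (at level 10, a at level 8).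

Ltac mexp := rewrite /Defs.mulJ sum_bidx !sum_bidx /bprod /prod_ev_od /xcross /=;
   rewrite /bas ?inord0 ?inord1 ?inord2 ?inord3 /mk !ffunE /=.

Lemma mulW0 (a c : J) : W0 (mulJ a c) = W0 a * W0 c + W1 a * W1 c + W2 a * W2 c - W3 a * W3 c
   + delta (X0 a) * X0 c - X0 a * delta (X0 c).
Proof. mexp. rewrite /wsq /=. ring. Qed.

Lemma mulW1 (a c : J) : W1 (mulJ a c) = W0 a * W1 c + W1 a * W0 c - X0 a * X1 c + X1 a * X0 c.
Proof. mexp. ring. Qed.
Lemma mulW2 (a c : J) : W2 (mulJ a c) = W0 a * W2 c + W2 a * W0 c - X0 a * X2 c + X2 a * X0 c.
Proof. mexp. ring. Qed.
Lemma mulW3 (a c : J) : W3 (mulJ a c) = W0 a * W3 c + W3 a * W0 c - X0 a * X3 c + X3 a * X0 c.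
Proof. mexp. ring. Qed.
Lemma mulX0 (a c : J) : X0 (mulJ a c) = W0 a * X0 c + X0 a * W0 c.
Proof. mexp. ring. Qed.
Lemma mulX1 (a c : J) : X1 (mulJ a c) = W0 a * X1 c + delta (W1 a) * X0 c - W3 a * X2 c + W2 a * X3 c
  + (W0 c * X1 a + delta (W1 c) * X0 a - W3 c * X2 a + W2 c * X3 a).
Proof. mexp. ring. Qed.
Lemma mulX2 (a c : J) : X2 (mulJ a c) = W0 a * X2 c + delta (W2 a) * X0 c - W1 a * X3 c + W3 a * X1 c
  + (W0 c * X2 a + delta (W2 c) * X0 a - W1 c * X3 a + W3 c * X1 a).
Proof. mexp. ring. Qed.
Lemma mulX3 (a c : J) : X3 (mulJ a c) = W0 a * X3 c + delta (W3 a) * X0 c - W1 a * X2 c + W2 a * X1 c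
  + (W0 c * X3 a + delta (W3 c) * X0 a - W1 c * X2 a + W2 c * X1 a).
Proof. mexp. ring. Qed.
End Pf.

Section Pf2.
Variables (F : fieldType) (Z : comAlgType F) (delta : {linear Z -> Z}) (sqrtm1 : F).
Hypothesis hchar : (2%:R : F) != 0.
Hypothesis hsqrt : sqrtm1 * sqrtm1 = -1.
Hypothesis hder : forall f g : Z, delta (f * g) = delta f * g + f * delta g.

Local Notation J := (J Z).
Local Notation mulJ := (mulJ delta).
Local Notation "'W0' a" := (a (false, i0)) (at level 10, a at level 8).
Local Notation "'W1' a" := (a (false, i1)) (at level 10, a at level 8).
Local Notation "'W2' a" := (a (false, i2)) (at level 10, a at level 8).
Local Notation "'W3' a" := (a (false, i3)) (at level 10, a at level 8).
Local Notation "'X0' a" := (a (true, i0)) (at level 10, a at level 8).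
Local Notation "'X1' a" := (a (true, i1)) (at level 10, a at level 8).
Local Notation "'X2' a" := (a (true, i2)) (at level 10, a at level 8).
Local Notation "'X3' a" := (a (true, i3)) (at level 10, a at level 8).
Local Notation I := (sqrtm1%:A : Z).

Local Notation mL := (locked (Defs.mulJ delta)).
Lemma mW0 a c : W0 (mL a c) = W0 a * W0 c + W1 a * W1 c + W2 a * W2 c - W3 a * W3 c
   + delta (X0 a) * X0 c - X0 a * delta (X0 c).
Proof. by rewrite -lock mulW0. Qed.
Lemma mW1 a c : W1 (mL a c) = W0 a * W1 c + W1 a * W0 c - X0 a * X1 c + X1 a * X0 c.
Proof. by rewrite -lock mulW1. Qed.
Lemma mW2 a c : W2 (mL a c) = W0 a * W2 c + W2 a * W0 c - X0 a * X2 c + X2 a * X0 c.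
Proof. by rewrite -lock mulW2. Qed.
Lemma mW3 a c : W3 (mL a c) = W0 a * W3 c + W3 a * W0 c - X0 a * X3 c + X3 a * X0 c.
Proof. by rewrite -lock mulW3. Qed.
Lemma mX0 a c : X0 (mL a c) = W0 a * X0 c + X0 a * W0 c.
Proof. by rewrite -lock mulX0. Qed.
Lemma mX1 a c : X1 (mL a c) = W0 a * X1 c + delta (W1 a) * X0 c - W3 a * X2 c + W2 a * X3 c
  + (W0 c * X1 a + delta (W1 c) * X0 a - W3 c * X2 a + W2 c * X3 a).
Proof. by rewrite -lock mulX1. Qed.
Lemma mX2 a c : X2 (mL a c) = W0 a * X2 c + delta (W2 a) * X0 c - W1 a * X3 c + W3 a * X1 c
  + (W0 c * X2 a + delta (W2 c) * X0 a - W1 c * X3 a + W3 c * X1 a).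
Proof. by rewrite -lock mulX2. Qed.
Lemma mX3 a c : X3 (mL a c) = W0 a * X3 c + delta (W3 a) * X0 c - W1 a * X2 c + W2 a * X1 c
  + (W0 c * X3 a + delta (W3 c) * X0 a - W1 c * X2 a + W2 c * X1 a).
Proof. by rewrite -lock mulX3. Qed.

Lemma hI : I * I = -1.
Proof. by rewrite mulr_algl scalerA hsqrt scaleN1r. Qed.

Lemma d1 : delta 1 = 0.
Proof. have h := hder 1 1. rewrite !mulr1 mul1r in h. by apply: (addrI (delta 1)); rewrite addr0 -h. Qed.

Definition mkJ (z0 z1 z2 z3 y0 y1 y2 y3 : Z) : J := [ffun b : bidx => if b.1 then
   (match nat_of_ord b.2 with 0 => y0 | 1 => y1 | 2 => y2 | _ => y3 end) else
   (match nat_of_ord b.2 with 0 => z0 | 1 => z1 | 2 => z2 | _ => z3 end)].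

Lemma Jext (a b : J) : W0 a = W0 b -> W1 a = W1 b -> W2 a = W2 b -> W3 a = W3 b ->
  X0 a = X0 b -> X1 a = X1 b -> X2 a = X2 b -> X3 a = X3 b -> a = b.
Proof.
move=> e0 e1 e2 e3 f0 f1 f2 f3; apply/ffunP => -[[] [[|[|[|[|k]]]] Hk]] //=.
- by have -> : Ordinal Hk = i0 by apply/val_inj.
- by have -> : Ordinal Hk = i1 by apply/val_inj.
- by have -> : Ordinal Hk = i2 by apply/val_inj.
- by have -> : Ordinal Hk = i3 by apply/val_inj.
- by have -> : Ordinal Hk = i0 by apply/val_inj.
- by have -> : Ordinal Hk = i1 by apply/val_inj.
- by have -> : Ordinal Hk = i2 by apply/val_inj.
- by have -> : Ordinal Hk = i3 by apply/val_inj.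
Qed.

Lemma mkJ_eta (a : J) : a = mkJ (W0 a) (W1 a) (W2 a) (W3 a) (X0 a) (X1 a) (X2 a) (X3 a).
Proof. by apply: Jext; rewrite ffunE /=. Qed.

Lemma mkJ_eq z0 z1 z2 z3 y0 y1 y2 y3 z0' z1' z2' z3' y0' y1' y2' y3' :
  z0 = z0' -> z1 = z1' -> z2 = z2' -> z3 = z3' -> y0 = y0' -> y1 = y1' -> y2 = y2' -> y3 = y3' ->
  mkJ z0 z1 z2 z3 y0 y1 y2 y3 = mkJ z0' z1' z2' z3' y0' y1' y2' y3'.
Proof. by move=> -> -> -> -> -> -> -> ->. Qed.

Section MK.
Variables z0 z1 z2 z3 y0 y1 y2 y3 z0' z1' z2' z3' y0' y1' y2' y3' : Z.
Local Notation A := (mkJ z0 z1 z2 z3 y0 y1 y2 y3).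
Local Notation B := (mkJ z0' z1' z2' z3' y0' y1' y2' y3').
Lemma addE : A + B = mkJ (z0 + z0') (z1 + z1') (z2 + z2') (z3 + z3') (y0 + y0') (y1 + y1') (y2 + y2') (y3 + y3').
Proof. by apply: Jext; rewrite !ffunE /=. Qed.
Lemma subE : A - B = mkJ (z0 - z0') (z1 - z1') (z2 - z2') (z3 - z3') (y0 - y0') (y1 - y1') (y2 - y2') (y3 - y3').
Proof. by apply: Jext; rewrite !ffunE /=. Qed.
Lemma oppE : - A = mkJ (- z0) (- z1) (- z2) (- z3) (- y0) (- y1) (- y2) (- y3).
Proof. by apply: Jext; rewrite !ffunE /=. Qed.
Lemma scaleE (r : F) : r *: A = mkJ (r%:A * z0) (r%:A * z1) (r%:A * z2) (r%:A * z3) (r%:A * y0) (r%:A * y1) (r%:A * y2) (r%:A * y3).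
Proof. by apply: Jext; rewrite !ffunE /= mulr_algl. Qed.
Lemma zscaleE (f : Z) : zscale f A = mkJ (f * z0) (f * z1) (f * z2) (f * z3) (f * y0) (f * y1) (f * y2) (f * y3).
Proof. by apply: Jext; rewrite !ffunE /=. Qed.
Lemma sprfE : spr false A = mkJ z0 z1 z2 z3 0 0 0 0.
Proof. by apply: Jext; rewrite !ffunE /=. Qed.
Lemma sprtE : spr true A = mkJ 0 0 0 0 y0 y1 y2 y3.
Proof. by apply: Jext; rewrite !ffunE /=. Qed.
Lemma zpr00E : zpr (false,false) A = mkJ z0 0 0 0 y0 0 0 0.
Proof. by apply: Jext; rewrite !ffunE /=. Qed.
Lemma zpr10E : zpr (true,false) A = mkJ 0 z1 0 0 0 y1 0 0.
Proof. by apply: Jext; rewrite !ffunE /=. Qed.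
Lemma zpr01E : zpr (false,true) A = mkJ 0 0 z2 0 0 0 y2 0.
Proof. by apply: Jext; rewrite !ffunE /=. Qed.
Lemma zpr11E : zpr (true,true) A = mkJ 0 0 0 z3 0 0 0 y3.
Proof. by apply: Jext; rewrite !ffunE /=. Qed.
Lemma mulE : mL A B = mkJ
 (z0 * z0' + z1 * z1' + z2 * z2' - z3 * z3' + delta y0 * y0' - y0 * delta y0')
 (z0 * z1' + z1 * z0' - y0 * y1' + y1 * y0')
 (z0 * z2' + z2 * z0' - y0 * y2' + y2 * y0')
 (z0 * z3' + z3 * z0' - y0 * y3' + y3 * y0')
 (z0 * y0' + y0 * z0')
 (z0 * y1' + delta z1 * y0' - z3 * y2' + z2 * y3' + (z0' * y1 + delta z1' * y0 - z3' * y2 + z2' * y3))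
 (z0 * y2' + delta z2 * y0' - z1 * y3' + z3 * y1' + (z0' * y2 + delta z2' * y0 - z1' * y3 + z3' * y1))
 (z0 * y3' + delta z3 * y0' - z1 * y2' + z2 * y1' + (z0' * y3 + delta z3' * y0 - z1' * y2 + z2' * y1)).
Proof. by apply: Jext; rewrite ?(mW0, mW1, mW2, mW3, mX0, mX1, mX2, mX3) !ffunE /=. Qed.
End MK.

Lemma mk_f0 z : mk (false, i0) z = mkJ z 0 0 0 0 0 0 0. Proof. by apply: Jext; rewrite /mk !ffunE /=. Qed.
Lemma mk_f1 z : mk (false, i1) z = mkJ 0 z 0 0 0 0 0 0. Proof. by apply: Jext; rewrite /mk !ffunE /=. Qed.
Lemma mk_f2 z : mk (false, i2) z = mkJ 0 0 z 0 0 0 0 0. Proof. by apply: Jext; rewrite /mk !ffunE /=. Qed.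
Lemma mk_f3 z : mk (false, i3) z = mkJ 0 0 0 z 0 0 0 0. Proof. by apply: Jext; rewrite /mk !ffunE /=. Qed.
Lemma mk_t0 z : mk (true, i0) z = mkJ 0 0 0 0 z 0 0 0. Proof. by apply: Jext; rewrite /mk !ffunE /=. Qed.
Lemma mk_t1 z : mk (true, i1) z = mkJ 0 0 0 0 0 z 0 0. Proof. by apply: Jext; rewrite /mk !ffunE /=. Qed.
Lemma mk_t2 z : mk (true, i2) z = mkJ 0 0 0 0 0 0 z 0. Proof. by apply: Jext; rewrite /mk !ffunE /=. Qed.
Lemma mk_t3 z : mk (true, i3) z = mkJ 0 0 0 0 0 0 0 z. Proof. by apply: Jext; rewrite /mk !ffunE /=. Qed.


Lemma W0E z0 z1 z2 z3 y0 y1 y2 y3 : W0 (mkJ z0 z1 z2 z3 y0 y1 y2 y3) = z0. Proof. by rewrite ffunE. Qed.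
Lemma W1E z0 z1 z2 z3 y0 y1 y2 y3 : W1 (mkJ z0 z1 z2 z3 y0 y1 y2 y3) = z1. Proof. by rewrite ffunE. Qed.
Lemma W2E z0 z1 z2 z3 y0 y1 y2 y3 : W2 (mkJ z0 z1 z2 z3 y0 y1 y2 y3) = z2. Proof. by rewrite ffunE. Qed.
Lemma W3E z0 z1 z2 z3 y0 y1 y2 y3 : W3 (mkJ z0 z1 z2 z3 y0 y1 y2 y3) = z3. Proof. by rewrite ffunE. Qed.
Lemma X0E z0 z1 z2 z3 y0 y1 y2 y3 : X0 (mkJ z0 z1 z2 z3 y0 y1 y2 y3) = y0. Proof. by rewrite ffunE. Qed.
Lemma X1E z0 z1 z2 z3 y0 y1 y2 y3 : X1 (mkJ z0 z1 z2 z3 y0 y1 y2 y3) = y1. Proof. by rewrite ffunE. Qed.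
Lemma X2E z0 z1 z2 z3 y0 y1 y2 y3 : X2 (mkJ z0 z1 z2 z3 y0 y1 y2 y3) = y2. Proof. by rewrite ffunE. Qed.
Lemma X3E z0 z1 z2 z3 y0 y1 y2 y3 : X3 (mkJ z0 z1 z2 z3 y0 y1 y2 y3) = y3. Proof. by rewrite ffunE. Qed.

Lemma d0 : delta 0 = 0. Proof. exact: raddf0. Qed.
Lemma dD x y : delta (x + y) = delta x + delta y. Proof. exact: raddfD. Qed.
Lemma dB x y : delta (x - y) = delta x - delta y. Proof. exact: raddfB. Qed.
Lemma dN x : delta (- x) = - delta x. Proof. exact: raddfN. Qed.
Lemma dZ (r : F) x : delta (r *: x) = r *: delta x. Proof. exact: linearZ. Qed.
Lemma dA (r : F) : delta r%:A = 0.
Proof. by rewrite linearZ /= d1 scaler0. Qed.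

Ltac zsimp := rewrite ?(mul0r, mulr0, add0r, addr0, subr0, sub0r, oppr0, d0, scale0r, scaler0, mulr1, mul1r, d1, opprK, scale1r, expr0).
Ltac mred := try rewrite [Defs.mulJ delta]lock;
   repeat progress (rewrite ?mulE ?addE ?subE ?oppE ?scaleE ?zscaleE ?sprfE ?sprtE ?zpr00E ?zpr10E ?zpr01E ?zpr11E ?expr0 ?scale1r ?W0E ?W1E ?W2E ?W3E ?X0E ?X1E ?X2E ?X3E).
Ltac dpush := rewrite ?(dD, dB, dN, d0, hder, dA, dZ, d1).
Ltac fin := apply: mkJ_eq; dpush; try ring: hI.

Definition PhiE (f g : Z) (c : J) : J :=
  mkJ (I * g * X3 c) (- f * W2 c - I * g * X2 c) (f * W1 c + I * g * X1 c)
      (I * (X0 c * delta g - g * delta (X0 c))) (I * g * W3 c)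
      (- f * X2 c - I * g * delta (W2 c)) (f * X1 c + I * g * delta (W1 c))
      (delta f * X0 c - I * g * delta (W0 c)).

Definition E0 (f : Z) (c : J) : J :=
  mkJ 0 (- f * W2 c) (f * W1 c) 0 0 (- f * X2 c) (f * X1 c) (delta f * X0 c).
Definition E1 (g : Z) (c : J) : J :=
  mkJ (I * g * X3 c) (- I * g * X2 c) (I * g * X1 c)
      (I * (X0 c * delta g - g * delta (X0 c))) (I * g * W3 c)
      (- I * g * delta (W2 c)) (I * g * delta (W1 c)) (- I * g * delta (W0 c)).

Lemma PhiE_split f g c : PhiE f g c = E0 f c + E1 g c.
Proof. rewrite /PhiE /E0 /E1 addE. apply: mkJ_eq; ring. Qed.

Lemma E0_mk f z0 z1 z2 z3 y0 y1 y2 y3 : E0 f (mkJ z0 z1 z2 z3 y0 y1 y2 y3) =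
  mkJ 0 (- f * z2) (f * z1) 0 0 (- f * y2) (f * y1) (delta f * y0).
Proof. by rewrite /E0 !ffunE. Qed.
Lemma E1_mk g z0 z1 z2 z3 y0 y1 y2 y3 : E1 g (mkJ z0 z1 z2 z3 y0 y1 y2 y3) =
  mkJ (I * g * y3) (- I * g * y2) (I * g * y1)
      (I * (y0 * delta g - g * delta y0)) (I * g * z3)
      (- I * g * delta z2) (I * g * delta z1) (- I * g * delta z0).
Proof. by rewrite /E1 !ffunE. Qed.

Lemma PhiK_E (a c : J) : PhiK delta sqrtm1 a c = PhiE (W0 a) (X0 a) c.
Proof.
rewrite (mkJ_eta c) /PhiE !ffunE /PhiK /Dop /vb /bas ?inord0 ?inord1 ?inord2 ?inord3 /=.
rewrite ?mk_f0 ?mk_f1 ?mk_f2 ?mk_f3 ?mk_t0 ?mk_t1 ?mk_t2 ?mk_t3.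
mred. fin.
Qed.

Lemma E1_leib g q (a b : J) : E1 g (mulJ (spr q a) b) =
  mulJ (E1 g (spr q a)) b + (-1) ^+ (true && q) *: mulJ (spr q a) (E1 g b).
Proof.
rewrite (mkJ_eta a) (mkJ_eta b) [Defs.mulJ _]lock; case: q => /=; rewrite ?sprfE ?sprtE ?expr1 ?expr0 ?scaleN1r ?scale1r;
rewrite ?mulE !E1_mk; mred; apply: mkJ_eq; dpush.
all: ring: hI.
Qed.


Lemma mkJ_sum z0 z1 z2 z3 y0 y1 y2 y3 : mkJ z0 z1 z2 z3 y0 y1 y2 y3 =
  mkJ z0 0 0 0 0 0 0 0 + mkJ 0 z1 0 0 0 0 0 0 + mkJ 0 0 z2 0 0 0 0 0 + mkJ 0 0 0 z3 0 0 0 0 +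
  (mkJ 0 0 0 0 y0 0 0 0 + mkJ 0 0 0 0 0 y1 0 0 + mkJ 0 0 0 0 0 0 y2 0 + mkJ 0 0 0 0 0 0 0 y3).
Proof. rewrite !addE; apply: mkJ_eq; ring. Qed.

Lemma phiJ_E (a : J) : phiJ sqrtm1 a =
  mkJ (W0 a) (I * W3 a) (W1 a) (- I * W2 a) (X0 a) (I * X3 a) (X1 a) (- I * X2 a).
Proof.
rewrite /phiJ /zlin sum_bidx /= /vb /cw /bas /= ?inord0 ?inord1 ?inord2 ?inord3.
rewrite ?mk_f0 ?mk_f1 ?mk_f2 ?mk_f3 ?mk_t0 ?mk_t1 ?mk_t2 ?mk_t3.
repeat progress rewrite ?oppE ?scaleE ?zscaleE ?addE; apply: mkJ_eq; rewrite ?scaleNr ?scale1r; ring: hI.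
Qed.

Lemma tauJ_E (a : J) : tauJ sqrtm1 a =
  mkJ (W0 a) (- W2 a) (- W1 a) (- W3 a) (X0 a) (- X2 a) (- X1 a) (- X3 a).
Proof.
rewrite /tauJ /zlin sum_bidx /= /vb /cw /bas /= ?inord0 ?inord1 ?inord2 ?inord3.
rewrite ?mk_f0 ?mk_f1 ?mk_f2 ?mk_f3 ?mk_t0 ?mk_t1 ?mk_t2 ?mk_t3.
repeat progress rewrite ?oppE ?scaleE ?zscaleE ?addE; apply: mkJ_eq; rewrite ?scaleNr ?scale1r; ring: hI.
Qed.

Lemma phiJ_mk z0 z1 z2 z3 y0 y1 y2 y3 : phiJ sqrtm1 (mkJ z0 z1 z2 z3 y0 y1 y2 y3) =
  mkJ z0 (I * z3) z1 (- I * z2) y0 (I * y3) y1 (- I * y2).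
Proof. by rewrite phiJ_E !ffunE. Qed.
Lemma tauJ_mk z0 z1 z2 z3 y0 y1 y2 y3 : tauJ sqrtm1 (mkJ z0 z1 z2 z3 y0 y1 y2 y3) =
  mkJ z0 (- z2) (- z1) (- z3) y0 (- y2) (- y1) (- y3).
Proof. by rewrite tauJ_E !ffunE. Qed.
Lemma PhiE_mk f g z0 z1 z2 z3 y0 y1 y2 y3 : PhiE f g (mkJ z0 z1 z2 z3 y0 y1 y2 y3) =
  mkJ (I * g * y3) (- f * z2 - I * g * y2) (f * z1 + I * g * y1)
      (I * (y0 * delta g - g * delta y0)) (I * g * z3)
      (- f * y2 - I * g * delta z2) (f * y1 + I * g * delta z1)
      (delta f * y0 - I * g * delta z0).
Proof. by rewrite /PhiE !ffunE. Qed.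

Ltac mred2 := repeat progress (rewrite ?phiJ_mk ?tauJ_mk ?PhiE_mk ?E0_mk ?E1_mk ?addE ?subE ?oppE ?scaleE ?zscaleE ?sprfE ?sprtE ?zpr00E ?zpr10E ?zpr01E ?zpr11E ?expr0 ?scale1r ?W0E ?W1E ?W2E ?W3E ?X0E ?X1E ?X2E ?X3E).

Lemma mp_phiD0 a z : mpart false (phiD sqrtm1 (PhiK delta sqrtm1 a)) z =
  phiJ sqrtm1 (E0 (W0 a) (phiJ sqrtm1 (phiJ sqrtm1 z))).
Proof. rewrite /mpart /phiD /= !PhiK_E (mkJ_eta z); mred2; fin. Qed.
Lemma mp_phiD1 a z : mpart true (phiD sqrtm1 (PhiK delta sqrtm1 a)) z =
  phiJ sqrtm1 (E1 (X0 a) (phiJ sqrtm1 (phiJ sqrtm1 z))).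
Proof. rewrite /mpart /phiD /= !PhiK_E (mkJ_eta z); mred2; fin. Qed.
Lemma mp_phi2D0 a z : mpart false (phi2D sqrtm1 (PhiK delta sqrtm1 a)) z =
  phiJ sqrtm1 (phiJ sqrtm1 (E0 (W0 a) (phiJ sqrtm1 z))).
Proof. rewrite /mpart /phi2D /= !PhiK_E (mkJ_eta z); mred2; fin. Qed.
Lemma mp_phi2D1 a z : mpart true (phi2D sqrtm1 (PhiK delta sqrtm1 a)) z =
  phiJ sqrtm1 (phiJ sqrtm1 (E1 (X0 a) (phiJ sqrtm1 z))).
Proof. rewrite /mpart /phi2D /= !PhiK_E (mkJ_eta z); mred2; fin. Qed.

Lemma bar_Phi a c : ckbarA sqrtm1 (PhiK delta sqrtm1 a) c = PhiK delta sqrtm1 a c.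
Proof. rewrite /ckbarA /tauD /= !PhiK_E (mkJ_eta c); mred2; fin. Qed.

Lemma sgnTT : (-1) ^+ (true && true) = - 1 :> F. Proof. by rewrite /= expr1. Qed.
Lemma sgnTF : (-1) ^+ (true && false) = 1 :> F. Proof. by rewrite /= expr0. Qed.
Lemma sgnFT : (-1) ^+ (false && true) = 1 :> F. Proof. by rewrite /= expr0. Qed.
Lemma sgnFF : (-1) ^+ (false && false) = 1 :> F. Proof. by rewrite /= expr0. Qed.

Lemma inK0 (a : J) : inK a -> a = mkJ (W0 a) 0 0 0 (X0 a) 0 0 0.
Proof. move=> Ka; apply: Jext; rewrite !ffunE //=; exact: Ka. Qed.

Lemma scomm_E (X Y : J -> J) c : scomm X Y c =
  (mpart true X (mpart true Y c) + mpart true Y (mpart true X c)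
   + (mpart true X (mpart false Y c) - mpart false Y (mpart true X c)))
  + (mpart false X (mpart true Y c) - mpart true Y (mpart false X c)
   + (mpart false X (mpart false Y c) - mpart false Y (mpart false X c))).
Proof. by rewrite /scomm !big_bool /= expr1 expr0 scaleN1r !scale1r opprK. Qed.

Lemma mult_Phi (a b : J) : inK a -> inK b ->
  PhiK delta sqrtm1 (mulJ a b) = ckmulA sqrtm1 (PhiK delta sqrtm1 a) (PhiK delta sqrtm1 b).
Proof.
move=> Ka Kb; apply: functional_extensionality => c.
rewrite /ckmulA /tauD /comp scomm_E.
rewrite !mp_phiD0 !mp_phiD1 !mp_phi2D0 !mp_phi2D1 PhiK_E.
rewrite (inK0 a Ka) (inK0 b Kb) (mkJ_eta c) [Defs.mulJ _]lock mulE.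
mred2.
apply: mkJ_eq; dpush.
all: ring: hI.
Qed.

Lemma spr_add p (a b : J) : spr p (a + b) = spr p a + spr p b.
Proof. apply/ffunP => x; rewrite !ffunE; case: (x.1 == p); by rewrite ?addr0. Qed.
Lemma spr_id p (a : J) : spr p (spr p a) = spr p a.
Proof. apply/ffunP => x; rewrite !ffunE; by case: (x.1 == p). Qed.
Lemma spr_orth p (a : J) : spr p (spr (~~ p) a) = 0.
Proof. apply/ffunP => -[q k]; rewrite !ffunE /=; by case: p; case: q. Qed.

Lemma linc (c s t u v : Z) : u = v -> s - t = c * (u - v) -> s = t.
Proof. move=> -> /eqP; rewrite subrr mulr0 subr_eq0 => /eqP. done. Qed.
Arguments linc c {s t u v}.

Local Notation mf0 h := (mkJ h 0 0 0 0 0 0 0).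
Local Notation mf1 h := (mkJ 0 h 0 0 0 0 0 0).
Local Notation mf2 h := (mkJ 0 0 h 0 0 0 0 0).
Local Notation mf3 h := (mkJ 0 0 0 h 0 0 0 0).
Local Notation mt0 h := (mkJ 0 0 0 0 h 0 0 0).
Local Notation mt1 h := (mkJ 0 0 0 0 0 h 0 0).
Local Notation mt2 h := (mkJ 0 0 0 0 0 0 h 0).
Local Notation mt3 h := (mkJ 0 0 0 0 0 0 0 h).

Ltac prodL := rewrite [Defs.mulJ _]lock mulE; apply: mkJ_eq; dpush; ring.
Lemma pf0f0 h k : mulJ (mf0 h) (mf0 k) = mf0 (h * k). Proof. prodL. Qed.
Lemma pf0f1 h k : mulJ (mf0 h) (mf1 k) = mf1 (h * k). Proof. prodL. Qed.
Lemma pf0f2 h k : mulJ (mf0 h) (mf2 k) = mf2 (h * k). Proof. prodL. Qed.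
Lemma pf0f3 h k : mulJ (mf0 h) (mf3 k) = mf3 (h * k). Proof. prodL. Qed.
Lemma pf0t0 h k : mulJ (mf0 h) (mt0 k) = mt0 (h * k). Proof. prodL. Qed.
Lemma pf0t1 h k : mulJ (mf0 h) (mt1 k) = mt1 (h * k). Proof. prodL. Qed.
Lemma pf0t2 h k : mulJ (mf0 h) (mt2 k) = mt2 (h * k). Proof. prodL. Qed.
Lemma pf0t3 h k : mulJ (mf0 h) (mt3 k) = mt3 (h * k). Proof. prodL. Qed.
Lemma pf3t0 h : mulJ (mf3 h) (mt0 1) = mt3 (delta h). Proof. prodL. Qed.
Lemma pt3t1 : mulJ (mt3 1) (mt1 1) = mf0 0. Proof. prodL. Qed.
Lemma pt3t2 : mulJ (mt3 1) (mt2 1) = mf0 0. Proof. prodL. Qed.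
Lemma pf1f2 : mulJ (mf1 1) (mf2 1) = mf0 0. Proof. prodL. Qed.
Lemma pf1t0 : mulJ (mf1 1) (mt0 1) = mf0 0. Proof. prodL. Qed.
Lemma pf2t0 : mulJ (mf2 1) (mt0 1) = mf0 0. Proof. prodL. Qed.
Lemma pf1t1 : mulJ (mf1 1) (mt1 1) = mf0 0. Proof. prodL. Qed.
Lemma pf2t2 : mulJ (mf2 1) (mt2 1) = mf0 0. Proof. prodL. Qed.
Lemma pf3t3 : mulJ (mf3 1) (mt3 1) = mf0 0. Proof. prodL. Qed.
Lemma pf3t0k k : mulJ (mf3 1) (mt0 k) = mf0 0. Proof. prodL. Qed.

Section Class.
Variables (X D0 D1 : J -> J).
Hypothesis sd0 : is_sder delta false D0.
Hypothesis sd1 : is_sder delta true D1.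
Hypothesis HX : forall a, X a = D0 a + D1 a.
Hypothesis Hdeg : forall be a, X (zpr be a) = zpr (zadd (true, true) be) (X (zpr be a)).

Lemma lin0 (r : F) a b : D0 (r *: a + b) = r *: D0 a + D0 b. Proof. by case: sd0. Qed.
Lemma lin1 (r : F) a b : D1 (r *: a + b) = r *: D1 a + D1 b. Proof. by case: sd1. Qed.
Lemma par0 q a : D0 (spr q a) = spr (addb q false) (D0 (spr q a)). Proof. by case: sd0 => _ []. Qed.
Lemma par1 q a : D1 (spr q a) = spr (addb q true) (D1 (spr q a)). Proof. by case: sd1 => _ []. Qed.
Lemma M0 q a b : D0 (mulJ (spr q a) b) =
     mulJ (D0 (spr q a)) b + (-1) ^+ (false && q) *: mulJ (spr q a) (D0 b).
Proof. by case: sd0 => _ []. Qed.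
Lemma M1 q a b : D1 (mulJ (spr q a) b) =
     mulJ (D1 (spr q a)) b + (-1) ^+ (true && q) *: mulJ (spr q a) (D1 b).
Proof. by case: sd1 => _ []. Qed.

Lemma Xlin (r : F) a b : X (r *: a + b) = r *: X a + X b.
Proof. by rewrite !HX lin0 lin1 scalerDr; rewrite addrACA. Qed.
Lemma XD a b : X (a + b) = X a + X b.
Proof. by have := Xlin 1 a b; rewrite !scale1r. Qed.

Lemma D0_hom p be m : spr p m = m -> zpr be m = m ->
  D0 m = spr p (zpr (zadd (true, true) be) (X m)).
Proof.
move=> Hs Hz.
have e0 : D0 m = spr p (D0 m) by have := par0 p m; rewrite addbF Hs.
have e1 : D1 m = spr (~~ p) (D1 m) by have := par1 p m; rewrite addbT Hs.
have ex : X m = zpr (zadd (true, true) be) (X m) by have := Hdeg be m; rewrite Hz.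
by rewrite -ex HX spr_add e1 spr_orth addr0 -e0.
Qed.
Lemma D1_hom p be m : spr p m = m -> zpr be m = m ->
  D1 m = spr (~~ p) (zpr (zadd (true, true) be) (X m)).
Proof.
move=> Hs Hz.
have e0 : D0 m = spr p (D0 m) by have := par0 p m; rewrite addbF Hs.
have e1 : D1 m = spr (~~ p) (D1 m) by have := par1 p m; rewrite addbT Hs.
have ex : X m = zpr (zadd (true, true) be) (X m) by have := Hdeg be m; rewrite Hz.
by rewrite -ex HX spr_add e0 -{2}[p]negbK spr_orth add0r -e1.
Qed.

Ltac shp L p be := rewrite (L p be) ?sprfE ?sprtE ?zpr00E ?zpr10E ?zpr01E ?zpr11E //;
  rewrite /zadd /= [X _]mkJ_eta ?sprfE ?sprtE ?zpr00E ?zpr10E ?zpr01E ?zpr11E ?W0E ?W1E ?W2E ?W3E ?X0E ?X1E ?X2E ?X3E ?sprfE ?sprtE //.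

Lemma S0f0 h : D0 (mf0 h) = mf3 (W3 (X (mf0 h))). Proof. shp D0_hom false (false,false). Qed.
Lemma S0f1 h : D0 (mf1 h) = mf2 (W2 (X (mf1 h))). Proof. shp D0_hom false (true,false). Qed.
Lemma S0f2 h : D0 (mf2 h) = mf1 (W1 (X (mf2 h))). Proof. shp D0_hom false (false,true). Qed.
Lemma S0f3 h : D0 (mf3 h) = mf0 (W0 (X (mf3 h))). Proof. shp D0_hom false (true,true). Qed.
Lemma S0t0 h : D0 (mt0 h) = mt3 (X3 (X (mt0 h))). Proof. shp D0_hom true (false,false). Qed.
Lemma S0t1 h : D0 (mt1 h) = mt2 (X2 (X (mt1 h))). Proof. shp D0_hom true (true,false). Qed.
Lemma S0t2 h : D0 (mt2 h) = mt1 (X1 (X (mt2 h))). Proof. shp D0_hom true (false,true). Qed.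
Lemma S0t3 h : D0 (mt3 h) = mt0 (X0 (X (mt3 h))). Proof. shp D0_hom true (true,true). Qed.
Lemma S1f0 h : D1 (mf0 h) = mt3 (X3 (X (mf0 h))). Proof. shp D1_hom false (false,false). Qed.
Lemma S1f1 h : D1 (mf1 h) = mt2 (X2 (X (mf1 h))). Proof. shp D1_hom false (true,false). Qed.
Lemma S1f2 h : D1 (mf2 h) = mt1 (X1 (X (mf2 h))). Proof. shp D1_hom false (false,true). Qed.
Lemma S1f3 h : D1 (mf3 h) = mt0 (X0 (X (mf3 h))). Proof. shp D1_hom false (true,true). Qed.
Lemma S1t0 h : D1 (mt0 h) = mf3 (W3 (X (mt0 h))). Proof. shp D1_hom true (false,false). Qed.
Lemma S1t1 h : D1 (mt1 h) = mf2 (W2 (X (mt1 h))). Proof. shp D1_hom true (true,false). Qed.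
Lemma S1t2 h : D1 (mt2 h) = mf1 (W1 (X (mt2 h))). Proof. shp D1_hom true (false,true). Qed.
Lemma S1t3 h : D1 (mt3 h) = mf0 (W0 (X (mt3 h))). Proof. shp D1_hom true (true,true). Qed.


Local Notation cA h := (W3 (X (mf0 h))).
Local Notation cB1 h := (W2 (X (mf1 h))).
Local Notation cB2 h := (W1 (X (mf2 h))).
Local Notation cB3 h := (W0 (X (mf3 h))).
Local Notation cC h := (X3 (X (mt0 h))).
Local Notation cC1 h := (X2 (X (mt1 h))).
Local Notation cC2 h := (X1 (X (mt2 h))).
Local Notation cC3 h := (X0 (X (mt3 h))).
Local Notation b1 h := (X3 (X (mf0 h))).
Local Notation bw1 h := (X2 (X (mf1 h))).
Local Notation bw2 h := (X1 (X (mf2 h))).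
Local Notation bw3 h := (X0 (X (mf3 h))).
Local Notation bx h := (W3 (X (mt0 h))).
Local Notation bx1 h := (W2 (X (mt1 h))).
Local Notation bx2 h := (W1 (X (mt2 h))).
Local Notation bx3 h := (W0 (X (mt3 h))).

Ltac fincomp idx := mred; move/(congr1 (fun v : J => v idx)); rewrite !ffunE /=.
Ltac rel0 q a b P idx := have := M0 q a b; rewrite ?sprfE ?sprtE P ?mulr1
   ?S0f0 ?S0f1 ?S0f2 ?S0f3 ?S0t0 ?S0t1 ?S0t2 ?S0t3 ?sgnFF ?sgnFT; fincomp idx.
Ltac rel1 q a b P idx := have := M1 q a b; rewrite ?sprfE ?sprtE P ?mulr1
   ?S1f0 ?S1f1 ?S1f2 ?S1f3 ?S1t0 ?S1t1 ?S1t2 ?S1t3 ?sgnTF ?sgnTT ?scaleN1r; fincomp idx.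
Ltac lsolve E := dpush; rewrite ?(dD, dB, dN, d0, hder, dA, dZ, d1) in E; first [ apply: (linc 1 E); ring | apply: (linc (-1) E); ring
   | apply: (linc 2%:R E); ring | apply: (linc (-2%:R) E); ring ].

Lemma eB3h h : cB3 h = - cA h + h * cB3 1.
Proof. rel0 false (mf0 h) (mf3 1) pf0f3 (false,i0) => E; lsolve E. Qed.
Lemma eC3h h : cC3 h = h * cC3 1.
Proof. rel0 false (mf0 h) (mt3 1) pf0t3 (true,i0) => E; lsolve E. Qed.
Lemma eC31 : cC3 1 = 0.
Proof. rel0 true (mt3 1) (mt1 1) pt3t1 (false,i1) => E; lsolve E. Qed.
Lemma eAC3 h : cC3 (delta h) = cB3 h.
Proof. rel0 false (mf3 h) (mt0 1) pf3t0 (true,i0) => E; lsolve E. Qed.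
Lemma eC3 h : cC3 h = 0.
Proof. by rewrite eC3h eC31 mulr0. Qed.
Lemma eB3 h : cB3 h = 0.
Proof. by rewrite -eAC3 eC3. Qed.
Lemma eA h : cA h = 0.
Proof. have := eB3h h; rewrite !eB3 mulr0 addr0 => /eqP; rewrite eq_sym oppr_eq0 => /eqP //. Qed.
Lemma eB1h h : cB1 h = h * cB1 1.
Proof. rel0 false (mf0 h) (mf1 1) pf0f1 (false,i2) => E; lsolve E. Qed.
Lemma eB2h h : cB2 h = h * cB2 1.
Proof. rel0 false (mf0 h) (mf2 1) pf0f2 (false,i1) => E; lsolve E. Qed.
Lemma eB21 : cB2 1 = - cB1 1.
Proof. rel0 false (mf1 1) (mf2 1) pf1f2 (false,i0) => E; lsolve E. Qed.
Lemma eCh h : cC h = h * cC 1.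
Proof. rel0 false (mf0 h) (mt0 1) pf0t0 (true,i3) => E; rewrite !eA in E; lsolve E. Qed.
Lemma eC1 : cC 1 = delta (cB1 1).
Proof. rel0 false (mf1 1) (mt0 1) pf1t0 (true,i2) => E; lsolve E. Qed.
Lemma eC1h h : cC1 h = h * cC1 1.
Proof. rel0 false (mf0 h) (mt1 1) pf0t1 (true,i2) => E; rewrite !eA in E; lsolve E. Qed.
Lemma eC11 : cC1 1 = cB1 1.
Proof. rel0 false (mf1 1) (mt1 1) pf1t1 (true,i3) => E; lsolve E. Qed.
Lemma eC2h h : cC2 h = h * cC2 1.
Proof. rel0 false (mf0 h) (mt2 1) pf0t2 (true,i1) => E; rewrite !eA in E; lsolve E. Qed.
Lemma eC21 : cC2 1 = cB2 1.
Proof. rel0 false (mf2 1) (mt2 1) pf2t2 (true,i3) => E; lsolve E. Qed.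

Lemma o1 : b1 1 = 0.
Proof. rel1 false (mf0 1) (mf0 1) pf0f0 (true,i3) => E; lsolve E. Qed.
Lemma o2 h : bw1 h = - b1 h + h * bw1 1.
Proof. rel1 false (mf0 h) (mf1 1) pf0f1 (true,i2) => E; lsolve E. Qed.
Lemma o3 h : bw2 h = b1 h + h * bw2 1.
Proof. rel1 false (mf0 h) (mf2 1) pf0f2 (true,i1) => E; lsolve E. Qed.
Lemma o4 h : bw3 h = h * bw3 1.
Proof. rel1 false (mf0 h) (mf3 1) pf0f3 (true,i0) => E; lsolve E. Qed.
Lemma o5 h : bx h = b1 h + h * bx 1.
Proof. rel1 false (mf0 h) (mt0 1) pf0t0 (false,i3) => E; lsolve E. Qed.
Lemma o6 h : bx1 h = h * bx1 1.
Proof. rel1 false (mf0 h) (mt1 1) pf0t1 (false,i2) => E; lsolve E. Qed.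
Lemma o7 h : bx2 h = h * bx2 1.
Proof. rel1 false (mf0 h) (mt2 1) pf0t2 (false,i1) => E; lsolve E. Qed.
Lemma o8 h : bx3 h = h * bx3 1.
Proof. rel1 false (mf0 h) (mt3 1) pf0t3 (false,i0) => E; lsolve E. Qed.
Lemma o9 : bw3 1 = bx3 1.
Proof. rel1 false (mf3 1) (mt3 1) pf3t3 (false,i3) => E; lsolve E. Qed.
Lemma o10 : bx1 1 = bx3 1.
Proof. rel1 true (mt3 1) (mt1 1) pt3t1 (true,i1) => E; lsolve E. Qed.
Lemma o11 : bx2 1 = - bx3 1.
Proof. rel1 true (mt3 1) (mt2 1) pt3t2 (true,i2) => E; lsolve E. Qed.
Lemma o12 : bw1 1 = 0.
Proof. rel1 false (mf1 1) (mt0 1) pf1t0 (false,i2) => E; lsolve E. Qed.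
Lemma o13 : bw2 1 = 0.
Proof. rel1 false (mf2 1) (mt0 1) pf2t0 (false,i1) => E; lsolve E. Qed.
Lemma o14 k : bx k = k * delta (bx3 1) - bx3 1 * delta k.
Proof. rel1 false (mf3 1) (mt0 k) pf3t0k (false,i0) => E; rewrite !o9 in E; lsolve E. Qed.

Section Fin.
Variables f G : Z.
Hypothesis Hf : cB1 1 = f.
Hypothesis HG : bx3 1 = G.

Lemma kA h : cA h = 0. Proof. exact: eA. Qed.
Lemma kB1 h : cB1 h = h * f. Proof. by rewrite eB1h Hf. Qed.
Lemma kB2 h : cB2 h = - (h * f). Proof. by rewrite eB2h eB21 Hf mulrN. Qed.
Lemma kB3 h : cB3 h = 0. Proof. exact: eB3. Qed.
Lemma kC h : cC h = h * delta f. Proof. by rewrite eCh eC1 Hf. Qed.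
Lemma kC1 h : cC1 h = h * f. Proof. by rewrite eC1h eC11 Hf. Qed.
Lemma kC2 h : cC2 h = - (h * f). Proof. by rewrite eC2h eC21 eB21 Hf mulrN. Qed.
Lemma kC3 h : cC3 h = 0. Proof. exact: eC3. Qed.
Lemma kbx h : bx h = h * delta G - G * delta h. Proof. by rewrite o14 HG. Qed.
Lemma kb1 h : b1 h = - (G * delta h).
Proof. have := o5 h; rewrite !kbx => E; lsolve E. Qed.
Lemma kbw1 h : bw1 h = G * delta h. Proof. by rewrite o2 o12 mulr0 addr0 kb1 opprK. Qed.
Lemma kbw2 h : bw2 h = - (G * delta h). Proof. by rewrite o3 o13 mulr0 addr0 kb1. Qed.
Lemma kbw3 h : bw3 h = h * G. Proof. by rewrite o4 o9 HG. Qed.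
Lemma kbx1 h : bx1 h = h * G. Proof. by rewrite o6 o10 HG. Qed.
Lemma kbx2 h : bx2 h = - (h * G). Proof. by rewrite o7 o11 HG mulrN. Qed.
Lemma kbx3 h : bx3 h = h * G. Proof. by rewrite o8 HG. Qed.

Ltac basis S0 S1 := rewrite HX S0 S1 PhiE_mk addE ?kA ?kB1 ?kB2 ?kB3 ?kC ?kC1 ?kC2 ?kC3
  ?kb1 ?kbw1 ?kbw2 ?kbw3 ?kbx ?kbx1 ?kbx2 ?kbx3; apply: mkJ_eq; dpush; ring: hI.

Local Notation g := (- I * G).
Lemma Bf0 h : X (mf0 h) = PhiE f g (mf0 h). Proof. basis S0f0 S1f0. Qed.
Lemma Bf1 h : X (mf1 h) = PhiE f g (mf1 h). Proof. basis S0f1 S1f1. Qed.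
Lemma Bf2 h : X (mf2 h) = PhiE f g (mf2 h). Proof. basis S0f2 S1f2. Qed.
Lemma Bf3 h : X (mf3 h) = PhiE f g (mf3 h). Proof. basis S0f3 S1f3. Qed.
Lemma Bt0 h : X (mt0 h) = PhiE f g (mt0 h). Proof. basis S0t0 S1t0. Qed.
Lemma Bt1 h : X (mt1 h) = PhiE f g (mt1 h). Proof. basis S0t1 S1t1. Qed.
Lemma Bt2 h : X (mt2 h) = PhiE f g (mt2 h). Proof. basis S0t2 S1t2. Qed.
Lemma Bt3 h : X (mt3 h) = PhiE f g (mt3 h). Proof. basis S0t3 S1t3. Qed.

Lemma Xall c : X c = PhiE f g c.
Proof.
rewrite [in LHS](mkJ_eta c) mkJ_sum !XD Bf0 Bf1 Bf2 Bf3 Bt0 Bt1 Bt2 Bt3 [in RHS](mkJ_eta c) !PhiE_mk !addE.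
apply: mkJ_eq; dpush; ring: hI.
Qed.
End Fin.

End Class.


Lemma addbTT : addb true true = false. Proof. by []. Qed.
Lemma addbTF : addb true false = true. Proof. by []. Qed.
Lemma addbFT : addb false true = true. Proof. by []. Qed.
Lemma addbFF : addb false false = false. Proof. by []. Qed.

Lemma E0_lin f (r : F) a b : E0 f (r *: a + b) = r *: E0 f a + E0 f b.
Proof.
rewrite (mkJ_eta a) (mkJ_eta b) scaleE addE !E0_mk scaleE addE; apply: mkJ_eq; dpush; ring.
Qed.
Lemma E1_lin g (r : F) a b : E1 g (r *: a + b) = r *: E1 g a + E1 g b.
Proof.
rewrite (mkJ_eta a) (mkJ_eta b) scaleE addE !E1_mk scaleE addE; apply: mkJ_eq; dpush; ring.
Qed.
Lemma E0_par f q a : E0 f (spr q a) = spr (addb q false) (E0 f (spr q a)).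
Proof.
rewrite (mkJ_eta a); case: q; rewrite ?addbTF ?addbFF; mred2; apply: mkJ_eq; ring.
Qed.
Lemma E1_par g q a : E1 g (spr q a) = spr (addb q true) (E1 g (spr q a)).
Proof.
rewrite (mkJ_eta a); case: q; rewrite ?addbTT ?addbFT; mred2; apply: mkJ_eq; dpush; ring.
Qed.

Lemma E0_leib f q (a b : J) : E0 f (mulJ (spr q a) b) =
  mulJ (E0 f (spr q a)) b + (-1) ^+ (false && q) *: mulJ (spr q a) (E0 f b).
Proof.
rewrite (mkJ_eta a) (mkJ_eta b) [Defs.mulJ _]lock; case: q; rewrite ?sgnFT ?sgnFF ?sprfE ?sprtE ?scale1r;
rewrite ?mulE !E0_mk; mred; apply: mkJ_eq; dpush.
all: ring: hI.
Qed.

Lemma E0_sder f : is_sder delta false (E0 f).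
Proof. split; [exact: E0_lin | split; [exact: E0_par | exact: E0_leib]]. Qed.
Lemma E1_sder g : is_sder delta true (E1 g).
Proof.
split; [exact: E1_lin | split; [exact: E1_par | ]].
move=> q a b; have := E1_leib g q a b. by case: q.
Qed.

Lemma zaddE x y : zadd (true, true) (x, y) = (~~ x, ~~ y).
Proof. by []. Qed.
Lemma nT : ~~ true = false. Proof. by []. Qed.
Lemma nF : ~~ false = true. Proof. by []. Qed.

Lemma Phi_deg a be c : PhiK delta sqrtm1 a (zpr be c) =
  zpr (zadd (true, true) be) (PhiK delta sqrtm1 a (zpr be c)).
Proof.
case: be => x y; rewrite zaddE !PhiK_E (mkJ_eta c).
case: x; case: y; rewrite ?nT ?nF; mred2; apply: mkJ_eq; dpush; ring.
Qed.

Lemma Phi_inA a : isDer_deg delta (true, true) (PhiK delta sqrtm1 a).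
Proof.
split; last exact: Phi_deg.
exists (E0 (W0 a)), (E1 (X0 a)); split; first exact: E0_sder.
split; first exact: E1_sder.
by move=> c; rewrite PhiK_E PhiE_split.
Qed.

Lemma Phi_inj a b : inK a -> inK b -> PhiK delta sqrtm1 a = PhiK delta sqrtm1 b -> a = b.
Proof.
move=> Ka Kb E.
have E1 : PhiK delta sqrtm1 a (mkJ 0 0 0 0 0 0 0 1) = PhiK delta sqrtm1 b (mkJ 0 0 0 0 0 0 0 1) :=
  congr1 (fun P => P (mkJ 0 0 0 0 0 0 0 1)) E.
have E2 : PhiK delta sqrtm1 a (mkJ 0 1 0 0 0 0 0 0) = PhiK delta sqrtm1 b (mkJ 0 1 0 0 0 0 0 0) :=
  congr1 (fun P => P (mkJ 0 1 0 0 0 0 0 0)) E.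
rewrite !PhiK_E !PhiE_mk in E1 E2.
move/(congr1 (fun v : J => v (false, i0))): E1; rewrite !ffunE /= => E1.
move/(congr1 (fun v : J => v (false, i2))): E2; rewrite !ffunE /= => E2.
rewrite (inK0 a Ka) (inK0 b Kb); apply: mkJ_eq => //.
- by apply: (linc 1 E2); ring.
- by apply: (linc (- I) E1); ring: hI.
Qed.

Lemma Phi_lin (r : F) a b : PhiK delta sqrtm1 (r *: a + b) =
  (fun c => r *: PhiK delta sqrtm1 a c + PhiK delta sqrtm1 b c).
Proof.
apply: functional_extensionality => c; rewrite !PhiK_E !ffunE (mkJ_eta c) !PhiE_mk scaleE addE.
apply: mkJ_eq; dpush; rewrite -?[r *: W0 a]mulr_algl -?[r *: X0 a]mulr_algl
  -?[r *: delta (W0 a)]mulr_algl -?[r *: delta (X0 a)]mulr_algl; ring.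
Qed.

Lemma Phi_hom p a : inK a -> hom_map p (PhiK delta sqrtm1 (spr p a)).
Proof.
move=> Ka c; rewrite /mpart !PhiK_E (inK0 a Ka) (mkJ_eta c).
case: p; rewrite ?nT ?nF ?sprfE ?sprtE; mred2; apply: mkJ_eq; dpush; ring: hI.
Qed.

Lemma classify X : isDer_deg delta (true, true) X ->
  exists a, inK a /\ PhiK delta sqrtm1 a = X.
Proof.
case=> [[D0 [D1 [s0 [s1 HX]]]] Hdeg].
exists (mkJ (W2 (X (mkJ 0 1 0 0 0 0 0 0))) 0 0 0 (- I * W0 (X (mkJ 0 0 0 0 0 0 0 1))) 0 0 0).
split; first by move=> [[] [[|[|[|[|k]]]] Hk]] //=; rewrite ffunE.
apply: functional_extensionality => c; rewrite PhiK_E W0E X0E.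
symmetry; apply: Xall; eauto.
Qed.

End Pf2.

Theorem theorem6p1 (F : fieldType) (Z : comAlgType F)
  (delta : {linear Z -> Z}) (sqrtm1 : F)
  (hchar : (2%:R : F) != 0)
  (hsqrt : sqrtm1 * sqrtm1 = -1)
  (hder : forall f g : Z, delta (f * g) = delta f * g + f * delta g)
  (hspan : forall z : Z, exists s : seq (Z * Z), z = \sum_(u <- s) u.1 * delta u.2) :
  let inA := isDer_deg delta (true, true) in
  (* bar X = X on A *)
  (forall X, inA X -> ckbarA sqrtm1 X = X) /\
  (* Phi : K -> A is an isomorphism of superalgebras *)
  (forall a, inK a -> inA (PhiK delta sqrtm1 a)) /\
  (forall a b, inK a -> inK b -> PhiK delta sqrtm1 a = PhiK delta sqrtm1 b -> a = b) /\
  (forall X, inA X -> exists a, inK a /\ PhiK delta sqrtm1 a = X) /\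
  (forall (r : F) a b, inK a -> inK b ->
     PhiK delta sqrtm1 (r *: a + b) = (fun c => r *: PhiK delta sqrtm1 a c + PhiK delta sqrtm1 b c)) /\
  (forall p a, inK a -> hom_map p (PhiK delta sqrtm1 (spr p a))) /\
  (forall a b, inK a -> inK b ->
     PhiK delta sqrtm1 (mulJ delta a b)
     = ckmulA sqrtm1 (PhiK delta sqrtm1 a) (PhiK delta sqrtm1 b)).
Proof.
move=> inA.
split.
  move=> X HX.
  have [a [Ka <-]] : exists a, inK a /\ PhiK delta sqrtm1 a = X by apply: classify.
  by apply: functional_extensionality => c; apply: bar_Phi.
split; first by move=> a _; apply: Phi_inA.
split; first by move=> a b Ka Kb; apply: Phi_inj.
split; first by move=> X HX; apply: classify.
split; first by move=> r a b _ _; apply: Phi_lin.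
split; first by move=> p a Ka; apply: Phi_hom.
by move=> a b Ka Kb; apply: mult_Phi.
Qed.
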